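(* Let $U$ and $V$ be linear subspaces of $\mathbb{R}^d$ such that $U\cap V^\perp=\{0\}$. Then there exists a positive definite linear map $H:\mathbb{R}^d\to\mathbb{R}^d$ such that $H(U)\subset V$. *)

(* Defs.v *)
(* R^d is modelled by row vectors 'rV[R]_d over a real field R;
   a linear subspace is the row space of a matrix (mxalgebra, %MS scope);
   a linear map R^d -> R^d is a square matrix H acting by x |-> x *m H. *)
From mathcomp Require Import all_boot all_order all_algebra.
Set Implicit Arguments. Unset Strict Implicit. Unset Printing Implicit Defensive.
Import Order.TTheory GRing.Theory Num.Theory.
Local Open Scope ring_scope.

Definition dotv (R : realFieldType) (d : nat) (x y : 'rV[R]_d) : R :=
  (x *m y^T) 0 0.

Definition in_perp (R : realFieldType) (d : nat) (V : 'M[R]_d) (x : 'rV[R]_d) : Prop :=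
  forall v : 'rV[R]_d, (v <= V)%MS -> dotv x v = 0.

Definition cap_perp_trivial (R : realFieldType) (d : nat) (U V : 'M[R]_d) : Prop :=
  forall u : 'rV[R]_d, (u <= U)%MS -> in_perp V u -> u = 0.

Definition pos_def (R : realFieldType) (d : nat) (H : 'M[R]_d) : Prop :=
  H^T = H /\ forall x : 'rV[R]_d, x != 0 -> 0 < dotv (x *m H) x.

(* Main.v *)
Require Import Defs.
From mathcomp Require Import all_boot all_order all_algebra.
Import Order.TTheory GRing.Theory Num.Theory.
Local Open Scope ring_scope.

Lemma sq_ge0 (R : realFieldType) n (y : 'rV[R]_n) : 0 <= (y *m y^T) 0 0.
Proof.
rewrite !mxE; apply: sumr_ge0 => i _; rewrite mxE; by rewrite -expr2 sqr_ge0.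
Qed.

Lemma sq_eq0 (R : realFieldType) n (y : 'rV[R]_n) : (y *m y^T) 0 0 = 0 -> y = 0.
Proof.
rewrite !mxE => /eqP; rewrite psumr_eq0 => [|i _]; last by rewrite mxE -expr2 sqr_ge0.
move/allP => H; apply/rowP => i; rewrite mxE.
have := H i (mem_index_enum i); rewrite /= mxE mulf_eq0 orbb => /eqP.
by [].
Qed.

Theorem lemma7 (R : realFieldType) (d : nat) (U V : 'M[R]_d) :
  cap_perp_trivial U V ->
  exists H : 'M[R]_d, pos_def H /\ (U *m H <= V)%MS.
Proof.
move=> hUV.
set C := kermx U^T.
have UC : U *m C^T = 0 by rewrite -[U]trmxK -trmx_mul mulmx_ker trmx0.
exists (V^T *m V + C^T *m C); split; last first.
  by rewrite mulmxDr (mulmxA U C^T) UC mul0mx addr0 mulmxA submxMl.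
split.
  by rewrite linearD /= !trmx_mul !trmxK.
move=> x x0.
have E : (x *m (V^T *m V + C^T *m C)) *m x^T
   = (x *m V^T) *m (x *m V^T)^T + (x *m C^T) *m (x *m C^T)^T.
  by rewrite !trmx_mul !trmxK mulmxDr mulmxDl !mulmxA.
rewrite /dotv E mxE.
have ha := @sq_ge0 R _ (x *m V^T); have hb := @sq_ge0 R _ (x *m C^T).
rewrite lt_def (addr_ge0 ha hb) andbT; apply/negP => /eqP/eqP.
rewrite paddr_eq0 // => /andP[/eqP /sq_eq0 a0 /eqP /sq_eq0 b0].
move/negP: x0; apply; apply/eqP; apply: hUV.
- have xK : (x <= kermx C^T)%MS by rewrite sub_kermx b0.
  have UK : (U <= kermx C^T)%MS by rewrite sub_kermx UC.
  have : (\rank (kermx C^T) <= \rank U)%N.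
    by rewrite !mxrank_ker mxrank_tr /C mxrank_ker mxrank_tr subKn // rank_leq_col.
  move=> hr; apply: submx_trans xK _.
  by rewrite -(mxrank_leqif_sup UK) eqn_leq hr mxrankS.
- move=> v /submxP[w ->]; rewrite /dotv trmx_mul mulmxA a0 mul0mx mxE.
  by [].
Qed.
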